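(* Let $(a_{ij})_{i,j=1}^s$, $(b_i)_{i=1}^s$ be the coefficients of a Runge–Kutta scheme with all $b_i\neq0$ which satisfies the classical order conditions up to order five and the simplifying assumptions $B(2)$, $C(2)$, $D(2)$. Then it also satisfies all the additional order conditions of order five: $$\sum_{k,l}\frac{a_{lk}c_kd_kd_l}{b_k}=\tfrac1{40},\ \sum_k\frac{c_k^2d_k^2}{b_k}=\tfrac1{30},\ \sum_l\frac{c_ld_l^3}{b_l^2}=\tfrac1{20},\ \sum_{k,l}\frac{a_{kl}d_k^2c_l}{b_k}=\tfrac1{60},\ \sum_m\frac{d_m^4}{b_m^3}=\tfrac15,$$ $$\sum_{i,j,k}b_ia_{ik}a_{ij}c_jc_k=\tfrac1{20},\ \sum_{j,k,l}a_{lk}a_{kj}c_jd_l=\tfrac1{120},\ \sum_{k,l}\frac{a_{lk}d_kc_ld_l}{b_k}=\tfrac7{120},\ \sum_{i,j,k}\frac{b_ib_j}{b_k}a_{jk}a_{ik}c_ic_j=\tfrac2{15},$$ $$\sum_{i,k}\frac{b_i}{b_k}a_{ik}c_ic_kd_k=\tfrac7{120},\ \sum_{i,l}\frac{b_i}{b_l^2}a_{il}c_id_l^2=\tfrac3{20},\ \sum_{k,l,m}\frac{a_{mk}a_{lk}d_ld_m}{b_k}=\tfrac1{20},\ \sum_{l,m}\frac{a_{ml}d_l^2d_m}{b_l^2}=\tfrac1{10},$$ $$\sum_{k,l,m}\frac{a_{ml}a_{lk}d_kd_m}{b_k}=\tfrac1{30},\ \sum_{i,k,l}\frac{b_i}{b_k}a_{lk}a_{ik}c_id_l=\tfrac3{40},\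 \sum_{i,k,l}\frac{b_i}{b_k}a_{ik}a_{il}d_kc_l=\tfrac3{40},$$ $$\sum_{i,l,m}\frac{b_i}{b_lb_m}a_{im}a_{il}d_ld_m=\tfrac2{15},\ \sum_{i,k}\frac{b_i}{b_k}a_{ik}c_i^2d_k=\tfrac3{20},\ \sum_{l,m}\frac{a_{lm}d_l^2d_m}{b_lb_m}=\tfrac1{15}.$$
   Context: All sums run from $1$ to $s$; $c_i=\sum_ja_{ij}$, $d_j=\sum_ib_ia_{ij}$. Simplifying assumptions: $B(p)$: $\sum_i b_ic_i^{q-1}=\frac1q$ for $q=1,\dots,p$; $C(\eta)$: $\sum_j a_{ij}c_j^{q-1}=\frac{c_i^q}{q}$ for all $i$ and $q=1,\dots,\eta$; $D(\zeta)$: $\sum_i b_ic_i^{q-1}a_{ij}=\frac{b_j}{q}(1-c_j^q)$ for all $j$ and $q=1,\dots,\zeta$. ''Classical order conditions up to order five'' are the standard Butcher rooted-tree conditions for an ODE $y'=f(y)$ up to order five. The additional conditions are those required (Bonnans–Laurent-Varin) for the discretization of an optimal control problem, with state scheme $(a_{ij},b_i)$ and adjoint scheme $\hat b_i=b_i$, $\hat a_{ij}=b_j-\frac{b_j}{b_i}a_{ji}$, to be of order five. *)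

(* Defs.v *)
From HB Require Import structures.
From mathcomp Require Import all_boot all_order all_algebra.
Set Implicit Arguments. Unset Strict Implicit. Unset Printing Implicit Defensive.
Import Order.TTheory GRing.Theory Num.Theory.
Local Open Scope ring_scope.

Section RK.
Variables (R : realFieldType) (s : nat).
Variables (a : 'I_s -> 'I_s -> R) (b : 'I_s -> R).

Definition rk_c (i : 'I_s) : R := \sum_(j < s) a i j.
Definition rk_d (j : 'I_s) : R := \sum_(i < s) b i * a i j.

Local Notation c := rk_c.
Local Notation d := rk_d.

Definition rk_B (p : nat) : Prop :=
  forall q : nat, (1 <= q <= p)%N ->
    \sum_(i < s) b i * c i ^+ q.-1 = q%:R^-1.

Definition rk_C (eta : nat) : Prop :=
  forall q : nat, (1 <= q <= eta)%N -> forall i : 'I_s,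
    \sum_(j < s) a i j * c j ^+ q.-1 = c i ^+ q / q%:R.

Definition rk_D (zeta : nat) : Prop :=
  forall q : nat, (1 <= q <= zeta)%N -> forall j : 'I_s,
    \sum_(i < s) b i * c i ^+ q.-1 * a i j = b j / q%:R * (1 - c j ^+ q).

(* Classical (Butcher rooted-tree) order conditions up to order five:
   all 17 rooted trees with at most 5 vertices. *)
Definition rk_classical_order5 : Prop :=
  (\sum_(i < s) b i = 1 /\
      \sum_(i < s) b i * c i = 1 / 2 /\
      \sum_(i < s) b i * c i ^+ 2 = 1 / 3 /\
      \sum_(i < s) \sum_(j < s) b i * a i j * c j = 1 / 6  /\
  (\sum_(i < s) b i * c i ^+ 3 = 1 / 4 /\
      \sum_(i < s) \sum_(j < s) b i * c i * a i j * c j = 1 / 8 /\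
      \sum_(i < s) \sum_(j < s) b i * a i j * c j ^+ 2 = 1 / 12 /\
      \sum_(i < s) \sum_(j < s) \sum_(k < s) b i * a i j * a j k * c k = 1 / 24  /\
  (\sum_(i < s) b i * c i ^+ 4 = 1 / 5 /\
      \sum_(i < s) \sum_(j < s) b i * c i ^+ 2 * a i j * c j = 1 / 10 /\
      \sum_(i < s) \sum_(j < s) b i * c i * a i j * c j ^+ 2 = 1 / 15 /\
      \sum_(i < s) \sum_(j < s) \sum_(k < s) b i * c i * a i j * a j k * c k = 1 / 30 /\
      \sum_(i < s) b i * (\sum_(j < s) a i j * c j) ^+ 2 = 1 / 20 /\
      \sum_(i < s) \sum_(j < s) b i * a i j * c j ^+ 3 = 1 / 20 /\
      \sum_(i < s) \sum_(j < s) \sum_(k < s) b i * a i j * c j * a j k * c k = 1 / 40 /\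
      \sum_(i < s) \sum_(j < s) \sum_(k < s) b i * a i j * a j k * c k ^+ 2 = 1 / 60  /\
      \sum_(i < s) \sum_(j < s) \sum_(k < s) \sum_(l < s)
          b i * a i j * a j k * a k l * c l = 1 / 120))).

(* The additional (Bonnans--Laurent-Varin) order conditions of order five
   for the optimal-control discretization. *)
Definition rk_additional_order5 : Prop :=
  (\sum_(k < s) \sum_(l < s) a l k * c k * d k * d l / b k = 1 / 40 /\
      \sum_(k < s) c k ^+ 2 * d k ^+ 2 / b k = 1 / 30 /\
      \sum_(l < s) c l * d l ^+ 3 / b l ^+ 2 = 1 / 20 /\
      \sum_(k < s) \sum_(l < s) a k l * d k ^+ 2 * c l / b k = 1 / 60 /\
      \sum_(m < s) d m ^+ 4 / b m ^+ 3 = 1 / 5 /\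
      \sum_(i < s) \sum_(j < s) \sum_(k < s) b i * a i k * a i j * c j * c k = 1 / 20 /\
      \sum_(j < s) \sum_(k < s) \sum_(l < s) a l k * a k j * c j * d l = 1 / 120 /\
      \sum_(k < s) \sum_(l < s) a l k * d k * c l * d l / b k = 7 / 120  /\
  (\sum_(i < s) \sum_(j < s) \sum_(k < s)
          b i * b j / b k * a j k * a i k * c i * c j = 2 / 15 /\
      \sum_(i < s) \sum_(k < s) b i / b k * a i k * c i * c k * d k = 7 / 120 /\
      \sum_(i < s) \sum_(l < s) b i / b l ^+ 2 * a i l * c i * d l ^+ 2 = 3 / 20 /\
      \sum_(k < s) \sum_(l < s) \sum_(m < s) a m k * a l k * d l * d m / b k = 1 / 20 /\
      \sum_(l < s) \sum_(m < s) a m l * d l ^+ 2 * d m / b l ^+ 2 = 1 / 10 /\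
      \sum_(k < s) \sum_(l < s) \sum_(m < s) a m l * a l k * d k * d m / b k = 1 / 30 /\
      \sum_(i < s) \sum_(k < s) \sum_(l < s) b i / b k * a l k * a i k * c i * d l = 3 / 40 /\
      \sum_(i < s) \sum_(k < s) \sum_(l < s) b i / b k * a i k * a i l * d k * c l = 3 / 40  /\
  (\sum_(i < s) \sum_(l < s) \sum_(m < s)
          b i / (b l * b m) * a i m * a i l * d l * d m = 2 / 15 /\
      \sum_(i < s) \sum_(k < s) b i / b k * a i k * c i ^+ 2 * d k = 3 / 20  /\
      \sum_(l < s) \sum_(m < s) a l m * d l ^+ 2 * d m / (b l * b m) = 1 / 15))).

End RK.

(* Main.v *)
Require Import Defs.
From HB Require Import structures.
From mathcomp Require Import all_boot all_order all_algebra.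
From mathcomp Require Import ring lra.
Import Order.TTheory GRing.Theory Num.Theory.
Local Open Scope ring_scope.

Ltac fld H := field; try (by rewrite ?H).
Ltac fin mom dE H x0 x1 x2 x3 x4 := apply: (mom _ x0 x1 x2 x3 x4) => [?|]; rewrite ?dE; fld H.

Theorem mainTheorem4 (R : realFieldType) (s : nat)
    (a : 'I_s -> 'I_s -> R) (b : 'I_s -> R) :
  (forall i : 'I_s, b i != 0) ->
  rk_classical_order5 a b ->
  rk_B a b 2 -> rk_C a 2 -> rk_D a b 2 ->
  rk_additional_order5 a b.
Proof.
move=> hb [m0 [m1 [m2 [_ [m3 [_ [_ [_ [m4 _]]]]]]]]] _ hC hD.
rewrite /rk_C in hC; rewrite /rk_D in hD.
set c := rk_c a in m1 m2 m3 m4 hC hD *.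
set d := rk_d a b.
have dE k : d k = b k * (1 - c k).
  have h := hD 1%N erefl k; rewrite expr1 divr1 in h; rewrite -h /d /rk_d.
  by apply: eq_bigr => i _; rewrite expr0 mulr1.
have D2 k : \sum_(i < s) b i * c i * a i k = b k / 2 * (1 - c k ^+ 2).
  rewrite -(hD 2%N erefl k); apply: eq_bigr => i _; by rewrite expr1.
have C2 i : \sum_(j < s) a i j * c j = c i ^+ 2 / 2.
  rewrite -(hC 2%N erefl i); apply: eq_bigr => j _; by rewrite expr1.
have Ed k : \sum_(l < s) d l * a l k = b k * (1 - c k) ^+ 2 / 2.
  transitivity (\sum_(l < s) b l * a l k - \sum_(l < s) b l * c l * a l k).
    rewrite -sumrB; apply: eq_bigr => l _; rewrite dE; ring.
  rewrite D2 -[\sum_(l < s) _ ]/(d k) dE; fld hb.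
have Ea l : \sum_(k < s) a l k * (1 - c k) = c l - c l ^+ 2 / 2.
  transitivity (\sum_(k < s) a l k - \sum_(k < s) a l k * c k).
    rewrite -sumrB; apply: eq_bigr => j _; ring.
  by rewrite C2.
have mom (F : 'I_s -> R) (x0 x1 x2 x3 x4 r : R) :
   (forall k, F k = b k * (x0 + x1 * c k + x2 * c k ^+ 2 + x3 * c k ^+ 3 + x4 * c k ^+ 4)) ->
   r = x0 + x1 / 2 + x2 / 3 + x3 / 4 + x4 / 5 -> \sum_(k < s) F k = r.
  move=> HF ->; rewrite (eq_bigr _ (fun k _ => HF k)).
  transitivity (x0 * \sum_(k < s) b k + x1 * \sum_(k < s) b k * c k +
     x2 * \sum_(k < s) b k * c k ^+ 2 + x3 * \sum_(k < s) b k * c k ^+ 3 +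
     x4 * \sum_(k < s) b k * c k ^+ 4).
    rewrite !mulr_sumr -!big_split; apply: eq_bigr => k0 _ /=; ring.
  rewrite m0 m1 m2 m3 m4; fld hb.
rewrite /rk_additional_order5 -/c -/d.
have fac (F G : 'I_s -> R) (x y : R) :
  (forall l, F l = x * G l) -> \sum_(l < s) G l = y -> \sum_(l < s) F l = x * y.
  by move=> HF <-; rewrite mulr_sumr; apply: eq_bigr => l0 _.
repeat split.
-
  have I k : \sum_(l < s) a l k * c k * d k * d l / b k = c k * d k / b k * (b k * (1 - c k) ^+ 2 / 2).
    by apply: (fac _ _ _ _ _ (Ed k)) => ?; rewrite ?dE; fld hb.
  under eq_bigr => ? _ do rewrite I.
  apply: (mom _ (0) (1/2) (-3/2) (3/2) (-1/2)) => [?|]; rewrite ?dE; fld hb.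
-
  apply: (mom _ (0) (0) (1) (-2) (1)) => [?|]; rewrite ?dE; fld hb.
-
  apply: (mom _ (0) (1) (-3) (3) (-1)) => [?|]; rewrite ?dE; fld hb.
-
  have I k : \sum_(l < s) a k l * d k ^+ 2 * c l / b k = d k ^+ 2 / b k * (c k ^+ 2 / 2).
    by apply: (fac _ _ _ _ _ (C2 k)) => ?; rewrite ?dE; fld hb.
  under eq_bigr => ? _ do rewrite I.
  apply: (mom _ (0) (0) (1/2) (-1) (1/2)) => [?|]; rewrite ?dE; fld hb.
-
  apply: (mom _ (1) (-4) (6) (-4) (1)) => [?|]; rewrite ?dE; fld hb.
-
  have I1 i j : \sum_(k < s) b i * a i k * a i j * c j * c k = b i * a i j * c j * (c i ^+ 2 / 2).
    by apply: (fac _ _ _ _ _ (C2 i)) => ?; rewrite ?dE; fld hb.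
  under eq_bigr => ? _ do under eq_bigr => ? _ do rewrite I1.
  have I2 i : \sum_(j < s) b i * a i j * c j * (c i ^+ 2 / 2) = b i * (c i ^+ 2 / 2) * (c i ^+ 2 / 2).
    by apply: (fac _ _ _ _ _ (C2 i)) => ?; rewrite ?dE; fld hb.
  under eq_bigr => ? _ do rewrite I2.
  apply: (mom _ (0) (0) (0) (0) (1/4)) => [?|]; rewrite ?dE; fld hb.
-
  have I1 j k : \sum_(l < s) a l k * a k j * c j * d l = a k j * c j * (b k * (1 - c k) ^+ 2 / 2).
    by apply: (fac _ _ _ _ _ (Ed k)) => ?; rewrite ?dE; fld hb.
  under eq_bigr => ? _ do under eq_bigr => ? _ do rewrite I1.
  rewrite exchange_big /=.
  have I2 k : \sum_(j < s) a k j * c j * (b k * (1 - c k) ^+ 2 / 2) = (b k * (1 - c k) ^+ 2 / 2) * (c k ^+ 2 / 2).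
    by apply: (fac _ _ _ _ _ (C2 k)) => ?; rewrite ?dE; fld hb.
  under eq_bigr => ? _ do rewrite I2.
  apply: (mom _ (0) (0) (1/4) (-1/2) (1/4)) => [?|]; rewrite ?dE; fld hb.
-
  rewrite exchange_big /=.
  have I l : \sum_(k < s) a l k * d k * c l * d l / b k = c l * d l * (c l - c l ^+ 2 / 2).
    by apply: (fac _ _ _ _ _ (Ea l)) => ?; rewrite ?dE; fld hb.
  under eq_bigr => ? _ do rewrite I.
  apply: (mom _ (0) (0) (1) (-3/2) (1/2)) => [?|]; rewrite ?dE; fld hb.
-
  under eq_bigr => ? _ do rewrite exchange_big.
  rewrite exchange_big /=.
  have I1 k i : \sum_(j < s) b i * b j / b k * a j k * a i k * c i * c j = b i * a i k * c i / b k * (b k / 2 * (1 - c k ^+ 2)).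
    by apply: (fac _ _ _ _ _ (D2 k)) => ?; rewrite ?dE; fld hb.
  under eq_bigr => ? _ do under eq_bigr => ? _ do rewrite I1.
  have I2 k : \sum_(i < s) b i * a i k * c i / b k * (b k / 2 * (1 - c k ^+ 2)) = (b k / 2 * (1 - c k ^+ 2)) / b k * (b k / 2 * (1 - c k ^+ 2)).
    by apply: (fac _ _ _ _ _ (D2 k)) => ?; rewrite ?dE; fld hb.
  under eq_bigr => ? _ do rewrite I2.
  apply: (mom _ (1/4) (0) (-1/2) (0) (1/4)) => [?|]; rewrite ?dE; fld hb.
-
  rewrite exchange_big /=.
  have I k : \sum_(i < s) b i / b k * a i k * c i * c k * d k = c k * d k / b k * (b k / 2 * (1 - c k ^+ 2)).
    by apply: (fac _ _ _ _ _ (D2 k)) => ?; rewrite ?dE; fld hb.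
  under eq_bigr => ? _ do rewrite I.
  apply: (mom _ (0) (1/2) (-1/2) (-1/2) (1/2)) => [?|]; rewrite ?dE; fld hb.
-
  rewrite exchange_big /=.
  have I l : \sum_(i < s) b i / b l ^+ 2 * a i l * c i * d l ^+ 2 = d l ^+ 2 / b l ^+ 2 * (b l / 2 * (1 - c l ^+ 2)).
    by apply: (fac _ _ _ _ _ (D2 l)) => ?; rewrite ?dE; fld hb.
  under eq_bigr => ? _ do rewrite I.
  apply: (mom _ (1/2) (-1) (0) (1) (-1/2)) => [?|]; rewrite ?dE; fld hb.
-
  have I1 k l : \sum_(m < s) a m k * a l k * d l * d m / b k = a l k * d l / b k * (b k * (1 - c k) ^+ 2 / 2).
    by apply: (fac _ _ _ _ _ (Ed k)) => ?; rewrite ?dE; fld hb.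
  under eq_bigr => ? _ do under eq_bigr => ? _ do rewrite I1.
  have I2 k : \sum_(l < s) a l k * d l / b k * (b k * (1 - c k) ^+ 2 / 2) = (b k * (1 - c k) ^+ 2 / 2) / b k * (b k * (1 - c k) ^+ 2 / 2).
    by apply: (fac _ _ _ _ _ (Ed k)) => ?; rewrite ?dE; fld hb.
  under eq_bigr => ? _ do rewrite I2.
  apply: (mom _ (1/4) (-1) (3/2) (-1) (1/4)) => [?|]; rewrite ?dE; fld hb.
-
  have I l : \sum_(m < s) a m l * d l ^+ 2 * d m / b l ^+ 2 = d l ^+ 2 / b l ^+ 2 * (b l * (1 - c l) ^+ 2 / 2).
    by apply: (fac _ _ _ _ _ (Ed l)) => ?; rewrite ?dE; fld hb.
  under eq_bigr => ? _ do rewrite I.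
  apply: (mom _ (1/2) (-2) (3) (-2) (1/2)) => [?|]; rewrite ?dE; fld hb.
-
  have I1 k l : \sum_(m < s) a m l * a l k * d k * d m / b k = a l k * d k / b k * (b l * (1 - c l) ^+ 2 / 2).
    by apply: (fac _ _ _ _ _ (Ed l)) => ?; rewrite ?dE; fld hb.
  under eq_bigr => ? _ do under eq_bigr => ? _ do rewrite I1.
  rewrite exchange_big /=.
  have I2 l : \sum_(k < s) a l k * d k / b k * (b l * (1 - c l) ^+ 2 / 2) = (b l * (1 - c l) ^+ 2 / 2) * (c l - c l ^+ 2 / 2).
    by apply: (fac _ _ _ _ _ (Ea l)) => ?; rewrite ?dE; fld hb.
  under eq_bigr => ? _ do rewrite I2.
  apply: (mom _ (0) (1/2) (-5/4) (1) (-1/4)) => [?|]; rewrite ?dE; fld hb.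
-
  have I1 i k : \sum_(l < s) b i / b k * a l k * a i k * c i * d l = b i / b k * a i k * c i * (b k * (1 - c k) ^+ 2 / 2).
    by apply: (fac _ _ _ _ _ (Ed k)) => ?; rewrite ?dE; fld hb.
  under eq_bigr => ? _ do under eq_bigr => ? _ do rewrite I1.
  rewrite exchange_big /=.
  have I2 k : \sum_(i < s) b i / b k * a i k * c i * (b k * (1 - c k) ^+ 2 / 2) = (b k * (1 - c k) ^+ 2 / 2) / b k * (b k / 2 * (1 - c k ^+ 2)).
    by apply: (fac _ _ _ _ _ (D2 k)) => ?; rewrite ?dE; fld hb.
  under eq_bigr => ? _ do rewrite I2.
  apply: (mom _ (1/4) (-1/2) (0) (1/2) (-1/4)) => [?|]; rewrite ?dE; fld hb.
-
  have I1 i k : \sum_(l < s) b i / b k * a i k * a i l * d k * c l = b i / b k * a i k * d k * (c i ^+ 2 / 2).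
    by apply: (fac _ _ _ _ _ (C2 i)) => ?; rewrite ?dE; fld hb.
  under eq_bigr => ? _ do under eq_bigr => ? _ do rewrite I1.
  have I2 i : \sum_(k < s) b i / b k * a i k * d k * (c i ^+ 2 / 2) = b i * (c i ^+ 2 / 2) * (c i - c i ^+ 2 / 2).
    by apply: (fac _ _ _ _ _ (Ea i)) => ?; rewrite ?dE; fld hb.
  under eq_bigr => ? _ do rewrite I2.
  apply: (mom _ (0) (0) (0) (1/2) (-1/4)) => [?|]; rewrite ?dE; fld hb.
-
  have I1 i l : \sum_(m < s) b i / (b l * b m) * a i m * a i l * d l * d m = b i / b l * a i l * d l * (c i - c i ^+ 2 / 2).
    by apply: (fac _ _ _ _ _ (Ea i)) => ?; rewrite ?dE; fld hb.
  under eq_bigr => ? _ do under eq_bigr => ? _ do rewrite I1.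
  have I2 i : \sum_(l < s) b i / b l * a i l * d l * (c i - c i ^+ 2 / 2) = b i * (c i - c i ^+ 2 / 2) * (c i - c i ^+ 2 / 2).
    by apply: (fac _ _ _ _ _ (Ea i)) => ?; rewrite ?dE; fld hb.
  under eq_bigr => ? _ do rewrite I2.
  apply: (mom _ (0) (0) (1) (-1) (1/4)) => [?|]; rewrite ?dE; fld hb.
-
  have I i : \sum_(k < s) b i / b k * a i k * c i ^+ 2 * d k = b i * c i ^+ 2 * (c i - c i ^+ 2 / 2).
    by apply: (fac _ _ _ _ _ (Ea i)) => ?; rewrite ?dE; fld hb.
  under eq_bigr => ? _ do rewrite I.
  apply: (mom _ (0) (0) (0) (1) (-1/2)) => [?|]; rewrite ?dE; fld hb.
-
  have I l : \sum_(m < s) a l m * d l ^+ 2 * d m / (b l * b m) = d l ^+ 2 / b l * (c l - c l ^+ 2 / 2).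
    by apply: (fac _ _ _ _ _ (Ea l)) => ?; rewrite ?dE; fld hb.
  under eq_bigr => ? _ do rewrite I.
  apply: (mom _ (0) (1) (-5/2) (2) (-1/2)) => [?|]; rewrite ?dE; fld hb.
Qed.
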